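(* Let $p\in(1,2]$ and $\delta\ge1$. Then for all $a,b,c,d\in\mathbb R$ and all $e,f\ge0$, $$\big(V_{p-1}(a-b)-V_{p-1}(c-d)\big)\big(V_\delta(a-c)e^p-V_\delta(b-d)f^p\big)$$ $$\ge\tfrac{p-1}{2^{\delta+1}}\big(|a-b|+|c-d|\big)^{p-2}\big(|a-c|+|b-d|\big)^{\delta-1}\big|(a-c)-(b-d)\big|^2(e^p+f^p)-\Big(\tfrac{2^{\delta+1}}{p-1}\Big)^{p-1}\big(|a-c|+|b-d|\big)^{p+\delta-1}|e-f|^p.$$
   Context: For $\gamma>0$ and $a\in\mathbb R$, $V_\gamma(a):=|a|^{\gamma-1}a$, with $V_\gamma(0):=0$. Expressions of the form $0^{p-2}\cdot 0$ (when $|a-b|+|c-d|=0$) are interpreted as $0$. *)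

(* Defs.v *)
From HB Require Import structures.
From mathcomp Require Import all_boot all_order all_algebra.
From mathcomp Require Import all_classical all_reals all_analysis.
Set Implicit Arguments. Unset Strict Implicit. Unset Printing Implicit Defensive.
Import Order.TTheory GRing.Theory Num.Theory.
Local Open Scope ring_scope.

Definition Vpow (R : realType) (g a : R) : R :=
  if a == 0 then 0 else `|a| `^ (g - 1) * a.

(* Main.v *)
Require Import Defs.
From HB Require Import structures.
From mathcomp Require Import all_boot all_order all_algebra.
From mathcomp Require Import all_classical all_reals all_analysis.
From mathcomp Require Import ring lra.
Import Order.TTheory GRing.Theory Num.Theory.
Local Open Scope ring_scope.
Set Implicit Arguments. Unset Strict Implicit.

Lemma bern_le (R : realType) (q x : R) : 0 < q -> q <= 1 -> 0 <= x ->
  x `^ q <= 1 + q * (x - 1).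
Proof.
move=> q0 q1 x0.
have [->|q1'] := eqVneq q 1; first by rewrite powRr1 //; lra.
have qlt : q < 1 by rewrite lt_neqAle q1' q1.
have := @conjugate_powR R (x `^ q) 1 (q^-1) ((1-q)^-1) (powR_ge0 _ _) ler01
   ltac:(by rewrite invr_gt0) ltac:(by rewrite invr_gt0 subr_gt0) ltac:(rewrite !invrK; lra).
rewrite mulr1 -powRrM mulfV ?gt_eqF // powRr1 // powR1 !invrK.
lra.
Qed.

Lemma bern_ge (R : realType) (r x : R) : 1 <= r -> 0 <= x ->
  1 + r * (x - 1) <= x `^ r.
Proof.
move=> r1 x0.
have [->|r1'] := eqVneq r 1; first by rewrite powRr1 //; lra.
have rlt : 1 < r by rewrite lt_neqAle eq_sym r1' r1.
have r0 : 0 < r by lra.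
have := @conjugate_powR R x 1 r (r / (r - 1)) x0 ler01
   r0 ltac:(apply: divr_gt0; lra) ltac:(rewrite invf_div; field; lra).
rewrite mulr1 powR1 => H.
have : r * x <= r * (x `^ r / r + 1 / (r / (r - 1))) by rewrite ler_pM2l.
have -> : r * (x `^ r / r + 1 / (r / (r - 1))) = x `^ r + (r - 1).
  by field; lra.
lra.
Qed.

Lemma poly_ineq (R : realType) (q w : R) : 0 < q -> q <= 1 -> 0 <= w -> w <= 1 + q ->
  (1 + q * (w - 1)) * (1 + q - w) <= 1.
Proof.
move=> q0 q1 w0 w1.
have E : 1 - (1 + q * (w - 1)) * (1 + q - w) = q * w ^+ 2 + (1 - 2 * q - q ^+ 2) * w + q ^+ 2.
  by ring.
suff : 0 <= q * w ^+ 2 + (1 - 2 * q - q ^+ 2) * w + q ^+ 2 by lra.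
have [k0|k0] := leP 0 (1 - 2 * q - q ^+ 2).
  have := mulr_ge0 k0 w0; have := mulr_ge0 (ltW q0) (sqr_ge0 w); have := sqr_ge0 q; lra.
have h1 : 0 <= q ^+ 3 + q ^+ 2 + 3 * q - 1.
  have : 0 <= q ^+ 3 by rewrite exprn_ge0 // ltW. lra.
have h2 : 0 <= - (q ^+ 4 + 2 * q ^+ 2 - 4 * q + 1).
  have -> : - (q ^+ 4 + 2 * q ^+ 2 - 4 * q + 1) = (1 - q) * (q ^+ 3 + q ^+ 2 + 3 * q - 1) by ring.
  apply: mulr_ge0 => //; lra.
have h3 : 0 <= (q * w - (2 * q + q ^+ 2 - 1) / 2) ^+ 2 by apply: sqr_ge0.
have E2 : q * (q * w ^+ 2 + (1 - 2 * q - q ^+ 2) * w + q ^+ 2) =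
   (q * w - (2 * q + q ^+ 2 - 1) / 2) ^+ 2 + (- (q ^+ 4 + 2 * q ^+ 2 - 4 * q + 1)) / 4.
  by field.
have : 0 <= q * (q * w ^+ 2 + (1 - 2 * q - q ^+ 2) * w + q ^+ 2) by rewrite E2; apply: addr_ge0 => //; apply: divr_ge0 => //.
by rewrite pmulr_rge0.
Qed.

Lemma Vpow_pos (R : realType) (g a : R) : 0 < g -> 0 < a -> Vpow g a = a `^ g.
Proof. by move=> g0 a0; rewrite /Vpow gt_eqF // gtr0_norm // mulrC mulr_powRB1 // ltW. Qed.

Lemma Vpow_opp (R : realType) (g a : R) : Vpow g (-a) = - Vpow g a.
Proof. by rewrite /Vpow oppr_eq0 normrN; case: ifP => _; [rewrite oppr0 | rewrite mulrN]. Qed.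

Lemma Vpow_nneg (R : realType) (g a : R) : 0 < g -> 0 <= a -> Vpow g a = a `^ g.
Proof.
move=> g0; rewrite le_eqVlt => /predU1P[<-|]; last exact: Vpow_pos.
by rewrite /Vpow eqxx powR0 // gt_eqF.
Qed.

Lemma Vpow_npos (R : realType) (g a : R) : 0 < g -> a <= 0 -> Vpow g a = - ((-a) `^ g).
Proof. by move=> g0 a0; rewrite -{1}(opprK a) Vpow_opp Vpow_nneg // oppr_ge0. Qed.

Lemma norm_Vpow (R : realType) (g a : R) : 0 < g -> `|Vpow g a| = `|a| `^ g.
Proof.
move=> g0; have [a0|a0] := leP 0 a.
  by rewrite Vpow_nneg // (ger0_norm (powR_ge0 _ _)) ger0_norm.
by rewrite Vpow_npos ?ltW // normrN (ger0_norm (powR_ge0 _ _)) ltr0_norm.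
Qed.

Lemma sym_cases (R : realType) (F : R -> R -> Prop) :
  (forall x y, F x y -> F y x) -> (forall x y, F x y -> F (-y) (-x)) ->
  (forall x y, 0 <= y -> y <= x -> F x y) -> (forall x y, y < 0 -> 0 < x -> F x y) ->
  forall x y, F x y.
Proof.
move=> Fs Fn F1 F2.
suff H : forall x y, y <= x -> F x y.
  by move=> x y; have [/H //|/ltW/H] := leP y x; apply: Fs.
move=> x y yx; have [y0|y0] := leP 0 y; first exact: F1.
have [x0|x0] := ltP 0 x; first exact: F2.
rewrite -(opprK x) -(opprK y); apply: Fn; apply: F1; rewrite ?oppr_ge0 ?lerN2 //.
Qed.

Lemma powR_anti (R : realType) (s a b : R) : s <= 0 -> 0 < a -> a <= b -> b `^ s <= a `^ s.
Proof.
move=> s0 a0 ab; have b0 : 0 < b by apply: (lt_le_trans a0).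
rewrite -[s]opprK (powRN b (-s)) (powRN a (-s)) lef_pV2 ?posrE ?powR_gt0 //.
exact: (@ge0_ler_powR R (-s) ltac:(by rewrite oppr_ge0) a b
  ltac:(by rewrite nnegrE ltW) ltac:(by rewrite nnegrE ltW) ab).
Qed.

Lemma le_powR_q (R : realType) (q s : R) : 0 < q -> q <= 1 -> 0 <= s -> s <= 1 -> s <= s `^ q.
Proof.
move=> q0 q1; rewrite le_eqVlt => /predU1P[<-|s0] s1; first by rewrite powR0 ?gt_eqF.
by apply: ger1_powR => //; rewrite s0 s1.
Qed.

Lemma subadd_powR (R : realType) (q a b : R) : 0 < q -> q <= 1 -> 0 <= a -> 0 <= b ->
  (a + b) `^ q <= a `^ q + b `^ q.
Proof.
move=> q0 q1 a0 b0.
have [S0|S0] := eqVneq (a + b) 0.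
  have a00 : a = 0 by lra.
  have b00 : b = 0 by lra.
  by rewrite S0 a00 b00 !powR0 ?gt_eqF // addr0.
have Sp : 0 < a + b by lra.
have ea : a = (a + b) * (a / (a + b)) by field.
have eb : b = (a + b) * (b / (a + b)) by field.
have ha : (a + b) `^ q * (a / (a + b)) <= a `^ q.
  rewrite [in a `^ q]ea powRM ?(ltW Sp) ?divr_ge0 ?(ltW Sp) // ler_pM2l ?powR_gt0 //.
  apply: le_powR_q => //; first by rewrite divr_ge0 ?(ltW Sp).
  by rewrite ler_pdivrMr // mul1r; lra.
have hb : (a + b) `^ q * (b / (a + b)) <= b `^ q.
  rewrite [in b `^ q]eb powRM ?(ltW Sp) ?divr_ge0 ?(ltW Sp) // ler_pM2l ?powR_gt0 //.
  apply: le_powR_q => //; first by rewrite divr_ge0 ?(ltW Sp).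
  by rewrite ler_pdivrMr // mul1r; lra.
have : (a + b) `^ q = (a + b) `^ q * (a / (a + b)) + (a + b) `^ q * (b / (a + b)).
  by field.
lra.
Qed.

Lemma mono_powR (R : realType) (r a b : R) : 0 <= r -> 0 <= a -> a <= b -> a `^ r <= b `^ r.
Proof.
move=> r0 a0 ab.
exact: (@ge0_ler_powR R r r0 a b ltac:(by rewrite nnegrE) ltac:(by rewrite nnegrE; apply: le_trans ab) ab).
Qed.


Lemma I1a (R : realType) (q x y : R) : 0 < q -> q <= 1 -> 0 <= y -> y <= x -> 0 < x ->
  q * x `^ (q - 1) * (x - y) <= x `^ q - y `^ q.
Proof.
move=> q0 q1 y0 yx x0.
have w0 : 0 <= y / x by rewrite divr_ge0 // ltW.
have hb := bern_le q0 q1 w0.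
have ey : y = x * (y / x) by field; lra.
have h1 : y `^ q <= x `^ q * (1 + q * (y / x - 1)).
  by rewrite [in y `^ q]ey powRM ?(ltW x0) // ler_pM2l ?powR_gt0.
have h2 : x `^ q * (1 + q * (y / x - 1)) = x `^ q + q * x `^ (q - 1) * (y - x).
  rewrite -(mulr_powRB1 (ltW x0) q0).
  move: (x `^ (q - 1)) => X; field; lra.
lra.
Qed.

Lemma I1 (R : realType) (q x y : R) : 0 < q -> q <= 1 ->
  q * (`|x| + `|y|) `^ (q - 1) * (x - y) ^+ 2 <= (Vpow q x - Vpow q y) * (x - y).
Proof.
move=> q0 q1; move: x y.
apply: (sym_cases (F := fun x y => q * (`|x| + `|y|) `^ (q - 1) * (x - y) ^+ 2 <= (Vpow q x - Vpow q y) * (x - y))).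
- move=> x y; rewrite addrC.
  have -> : (y - x) ^+ 2 = (x - y) ^+ 2 by ring.
  have -> : (Vpow q y - Vpow q x) * (y - x) = (Vpow q x - Vpow q y) * (x - y) by ring.
  by [].
- move=> x y; rewrite !normrN addrC !Vpow_opp.
  have -> : (- y - - x) = x - y by ring.
  have -> : (- Vpow q y - - Vpow q x) = Vpow q x - Vpow q y by ring.
  by [].
- move=> x y y0 yx.
  have x0 : 0 <= x by lra.
  rewrite (Vpow_nneg q0 x0) (Vpow_nneg q0 y0) (ger0_norm x0) (ger0_norm y0).
  have [xz|xp] := eqVneq x 0.
    have yz : y = 0 by lra.
    rewrite xz yz subrr expr0n /= !mulr0 //.
  have xp' : 0 < x by lra.
  have ha : (x + y) `^ (q - 1) <= x `^ (q - 1) by apply: powR_anti => //; lra.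
  have hb := I1a q0 q1 y0 yx xp'.
  have hc : q * (x + y) `^ (q - 1) * (x - y) <= q * x `^ (q - 1) * (x - y).
    apply: ler_wpM2r; first lra.
    by apply: ler_wpM2l => //; apply: ltW.
  rewrite expr2 mulrA.
  apply: ler_pM; rewrite ?subr_ge0 //; last by apply: le_trans hb.
  by rewrite mulr_ge0 ?mulr_ge0 ?powR_ge0 ?subr_ge0 // ltW.
- move=> x y y0 x0.
  rewrite (Vpow_pos q0 x0) (Vpow_npos q0 (ltW y0)) (gtr0_norm x0) (ltr0_norm y0).
  have my0 : 0 < - y by lra.
  have -> : x - y = x + - y by [].
  set N := x + - y.
  have N0 : 0 < N by rewrite /N; lra.
  have hs := subadd_powR q0 q1 (ltW x0) (ltW my0).
  have e1 : q * N `^ (q - 1) * N ^+ 2 = q * N `^ q * N.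
    by rewrite -(mulr_powRB1 (ltW N0) q0) expr2; ring.
  rewrite e1 ler_pM2r // opprK.
  have : 0 <= N `^ q by apply: powR_ge0.
  rewrite /N in hs *. nra.
Qed.


Lemma Wup (R : realType) (q x y : R) : 0 < q -> q <= 1 ->
  `|Vpow q x - Vpow q y| <= 2 * `|x - y| `^ q.
Proof.
move=> q0 q1; move: x y.
apply: (sym_cases (F := fun x y => `|Vpow q x - Vpow q y| <= 2 * `|x - y| `^ q)).
- by move=> x y; rewrite distrC [`|y - x|]distrC.
- move=> x y; rewrite !Vpow_opp.
  have -> : (- y - - x) = x - y by ring.
  have -> : (- Vpow q y - - Vpow q x) = Vpow q x - Vpow q y by ring.
  by [].
- move=> x y y0 yx.
  have x0 : 0 <= x by lra.
  rewrite (Vpow_nneg q0 x0) (Vpow_nneg q0 y0) (ger0_norm (x := x - y)); last lra.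
  have h1 : y `^ q <= x `^ q.
    apply: mono_powR; lra.
  have h2 := subadd_powR q0 q1 (a := x - y) (b := y) ltac:(lra) y0.
  have e : x - y + y = x by ring.
  rewrite e in h2.
  rewrite ger0_norm; last lra.
  have := powR_ge0 (x - y) q; lra.
- move=> x y y0 x0.
  rewrite (Vpow_pos q0 x0) (Vpow_npos q0 (ltW y0)) (ger0_norm (x := x - y)); last lra.
  have h1 : x `^ q <= (x - y) `^ q.
    apply: mono_powR; lra.
  have h2 : (- y) `^ q <= (x - y) `^ q.
    apply: mono_powR; lra.
  rewrite opprK ger0_norm; last by apply: addr_ge0; apply: powR_ge0.
  lra.
Qed.

Lemma two_pow (R : realType) (d : R) : (2 : R) `^ (d + 1) = 4 * 2 `^ (d - 1).
Proof.
have -> : d + 1 = (d - 1) + 2%:R by rewrite -natr1; ring.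
rewrite powRD; last by rewrite implybE; apply/orP; right; rewrite pnatr_eq0.
by rewrite powR_mulrn // mulrC; congr (_ * _); rewrite expr2; lra.
Qed.

Lemma two_pow' (R : realType) (d : R) : (2 : R) `^ (d + 1) = 2 * 2 `^ d.
Proof.
rewrite powRD; last by rewrite implybE; apply/orP; right; rewrite pnatr_eq0.
by rewrite powRr1 // mulrC.
Qed.

Lemma Dlow (R : realType) (d u v : R) : 1 <= d ->
  4 * (`|u| + `|v|) `^ (d - 1) * (u - v) ^+ 2 <= 2 `^ (d + 1) * ((Vpow d u - Vpow d v) * (u - v)).
Proof.
move=> d1; have d0 : 0 < d by lra.
move: u v.
apply: (sym_cases (F := fun u v => 4 * (`|u| + `|v|) `^ (d - 1) * (u - v) ^+ 2 <= 2 `^ (d + 1) * ((Vpow d u - Vpow d v) * (u - v)))).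
- move=> x y; rewrite addrC.
  have -> : (y - x) ^+ 2 = (x - y) ^+ 2 by ring.
  have -> : (Vpow d y - Vpow d x) * (y - x) = (Vpow d x - Vpow d y) * (x - y) by ring.
  by [].
- move=> x y; rewrite !normrN addrC !Vpow_opp.
  have -> : (- y - - x) = x - y by ring.
  have -> : (- Vpow d y - - Vpow d x) = Vpow d x - Vpow d y by ring.
  by [].
- move=> u v v0 vu.
  have u0 : 0 <= u by lra.
  rewrite (Vpow_nneg d0 u0) (Vpow_nneg d0 v0) (ger0_norm u0) (ger0_norm v0).
  have h1 : v `^ (d - 1) <= u `^ (d - 1).
    apply: mono_powR; lra.
  have h1' : u `^ (d - 1) * (u - v) <= u `^ d - v `^ d.
    rewrite -(mulr_powRB1 u0 d0) -(mulr_powRB1 v0 d0).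
    have := powR_ge0 u (d - 1); nra.
  have h2 : (u + v) `^ (d - 1) <= 2 `^ (d - 1) * u `^ (d - 1).
    rewrite -powRM //.
    apply: mono_powR; lra.
  rewrite two_pow.
  have hp : 0 <= 2 `^ (d - 1) := powR_ge0 _ _.
  have hq : 0 <= (u + v) `^ (d - 1) := powR_ge0 _ _.
  have h3 : (u + v) `^ (d - 1) * (u - v) <= 2 `^ (d - 1) * (u `^ d - v `^ d).
    apply: (le_trans (y := 2 `^ (d - 1) * u `^ (d - 1) * (u - v))).
      by apply: ler_wpM2r; lra.
    by rewrite -mulrA; apply: ler_wpM2l.
  have h4 : (u + v) `^ (d - 1) * (u - v) * (u - v) <= 2 `^ (d - 1) * (u `^ d - v `^ d) * (u - v).
    by apply: ler_wpM2r; lra.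
  rewrite expr2; nra.
- move=> u v v0 u0.
  rewrite (Vpow_pos d0 u0) (Vpow_npos d0 (ltW v0)) (gtr0_norm u0) (ltr0_norm v0).
  set w := - v.
  have w0 : 0 < w by rewrite /w; lra.
  have -> : u - v = u + w by rewrite /w; ring.
  have -> : u `^ d - - w `^ d = u `^ d + w `^ d by ring.
  set M := u + w.
  have M0 : 0 < M by rewrite /M; lra.
  have hz1 := bern_ge d1 (x := 2 * u / M) ltac:(apply: divr_ge0; lra).
  have hz2 := bern_ge d1 (x := 2 * w / M) ltac:(apply: divr_ge0; lra).
  have eu : u `^ d = (M / 2) `^ d * (2 * u / M) `^ d.
    rewrite -powRM; [congr (_ `^ _); field; lra | apply: divr_ge0; lra | apply: divr_ge0; lra].
  have ew : w `^ d = (M / 2) `^ d * (2 * w / M) `^ d.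
    rewrite -powRM; [congr (_ `^ _); field; lra | apply: divr_ge0; lra | apply: divr_ge0; lra].
  have hs : 2 * u / M + 2 * w / M = 2 by rewrite /M; field; lra.
  have hm : 0 <= (M / 2) `^ d := powR_ge0 _ _.
  have h5 : 2 * (M / 2) `^ d <= u `^ d + w `^ d.
    rewrite eu ew -mulrDr mulrC; apply: ler_wpM2l => //.
    have e0 : (2 * u / M - 1) + (2 * w / M - 1) = 0 by lra.
    have : d * (2 * u / M - 1) + d * (2 * w / M - 1) = 0 by rewrite -mulrDr e0 mulr0.
    lra.
  have eM : M `^ d = 2 `^ d * (M / 2) `^ d.
    by rewrite -powRM // ?divr_ge0 //; [congr (_ `^ _); field | lra].
  have eM2 : M `^ (d - 1) * M ^+ 2 = M `^ d * M.
    by rewrite -(mulr_powRB1 (ltW M0) d0) expr2; ring.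
  rewrite -mulrA eM2 two_pow' eM.
  have h2d : 0 <= 2 `^ d := powR_ge0 _ _.
  have : 2 `^ d * (2 * (M / 2) `^ d) <= 2 `^ d * (u `^ d + w `^ d) by apply: ler_wpM2l.
  nra.
Qed.

Lemma Sbound (R : realType) (d u v : R) : 1 <= d ->
  `|Vpow d u + Vpow d v| <= (`|u| + `|v|) `^ d.
Proof.
move=> d1; have d0 : 0 < d by lra.
apply: (le_trans (ler_normD _ _)); rewrite !norm_Vpow //.
have hu : `|u| `^ d <= `|u| * (`|u| + `|v|) `^ (d - 1).
  rewrite -(mulr_powRB1 (normr_ge0 u) d0); apply: ler_wpM2l => //.
  apply: mono_powR => //; [lra | rewrite lerDl //].
have hv : `|v| `^ d <= `|v| * (`|u| + `|v|) `^ (d - 1).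
  rewrite -(mulr_powRB1 (normr_ge0 v) d0); apply: ler_wpM2l => //.
  apply: mono_powR => //; [lra | rewrite lerDr //].
rewrite -(mulr_powRB1 (addr_ge0 (normr_ge0 u) (normr_ge0 v)) d0); lra.
Qed.


Lemma gb1 (R : realType) (p e f : R) : 1 <= p -> 0 <= f -> f <= e ->
  e `^ p - f `^ p <= p * e `^ (p - 1) * (e - f).
Proof.
move=> p1 f0 fe; have p0 : 0 < p by lra.
have [ez|ep] := eqVneq e 0.
  have fz : f = 0 by lra.
  by rewrite ez fz !subrr mulr0.
have e0 : 0 < e by lra.
have hb := bern_ge p1 (x := f / e) ltac:(apply: divr_ge0; lra).
have ef : f = e * (f / e) by field.
have h1 : e `^ p * (1 + p * (f / e - 1)) <= f `^ p.
  by rewrite [in f `^ p]ef powRM ?(ltW e0) ?divr_ge0 ?(ltW e0) // ler_pM2l ?powR_gt0.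
have h2 : e `^ p * (1 + p * (f / e - 1)) = e `^ p + p * e `^ (p - 1) * (f - e).
  rewrite -(mulr_powRB1 (ltW e0) p0).
  move: (e `^ (p - 1)) => X; field; lra.
lra.
Qed.

Lemma gbound (R : realType) (p e f : R) : 1 <= p -> 0 <= e -> 0 <= f ->
  exists m, 0 <= m /\ `|e `^ p - f `^ p| <= p * m `^ (p - 1) * `|e - f| /\
  m `^ p <= e `^ p + f `^ p.
Proof.
move=> p1 e0 f0.
have [fe|ef] := leP f e.
  exists e; split => //; split; last by have := powR_ge0 f p; lra.
  have h1 : f `^ p <= e `^ p by apply: mono_powR; lra.
  rewrite !ger0_norm; [exact: gb1 | lra | lra].
exists f; split => //; split; last by have := powR_ge0 e p; lra.
have h1 : e `^ p <= f `^ p by apply: mono_powR; lra.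
rewrite distrC [`|e - f|]distrC !ger0_norm; [apply: gb1; lra | lra | lra].
Qed.

Lemma scal (R : realType) (q X Y : R) : 0 < q -> q <= 1 -> 0 <= X -> 0 <= Y ->
  X `^ q * ((1 + q) * Y - X) <= Y `^ q * Y.
Proof.
move=> q0 q1 X0 Y0.
have hY : 0 <= Y `^ q * Y by apply: mulr_ge0 => //; apply: powR_ge0.
have [hn|hp] := leP ((1 + q) * Y - X) 0.
  apply: le_trans hY; apply: mulr_ge0_le0 => //; apply: powR_ge0.
have Yp : 0 < Y.
  rewrite lt_neqAle Y0 andbT; apply/eqP => Yz; move: hp; rewrite -Yz; lra.
have w0 : 0 <= X / Y by apply: divr_ge0.
have w1 : X / Y <= 1 + q by rewrite ler_pdivrMr //; lra.
have hb := bern_le q0 q1 w0.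
have eX : X = Y * (X / Y) by field; lra.
have h1 : X `^ q <= Y `^ q * (1 + q * (X / Y - 1)).
  by rewrite [in X `^ q]eX powRM // ler_pM2l ?powR_gt0.
have h2 : X `^ q * ((1 + q) * Y - X) <= Y `^ q * (1 + q * (X / Y - 1)) * ((1 + q) * Y - X).
  by apply: ler_wpM2r => //; apply: ltW.
have h3 : Y `^ q * (1 + q * (X / Y - 1)) * ((1 + q) * Y - X) =
   Y `^ q * Y * ((1 + q * (X / Y - 1)) * (1 + q - X / Y)).
  by field; lra.
have h4 := poly_ineq q0 q1 w0 w1.
apply: (le_trans h2); rewrite h3.
by rewrite -[X in _ <= X]mulr1; apply: ler_wpM2l.
Qed.


Lemma final_scal (R : realType) (p d t M m k c : R) : 1 < p -> p <= 2 -> 1 <= d ->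
  0 <= t -> 0 <= M -> 0 <= m -> 0 <= k -> 0 < c ->
  2 * t `^ (p - 1) * (M `^ d * p * m `^ (p - 1) * k / 2 - M `^ (d - 1) * t * m `^ p / c)
  <= (c / (p - 1)) `^ (p - 1) * M `^ (d - 1 + p) * k `^ p.
Proof.
move=> p1 p2 d1 t0 M0 m0 k0 c0.
set q := p - 1.
have q0 : 0 < q by rewrite /q; lra.
have q1 : q <= 1 by rewrite /q; lra.
have ep : p = 1 + q by rewrite /q; ring.
set X := 2 * t * m / c.
set Y := M * k.
have X0 : 0 <= X by rewrite /X; apply: divr_ge0 => //; [nra | lra].
have Y0 : 0 <= Y by rewrite /Y; nra.
have hs := scal q0 q1 X0 Y0.
have eMd : M `^ d = M * M `^ (d - 1) by rewrite mulr_powRB1 //; lra.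
have emp : m `^ p = m * m `^ q by rewrite mulr_powRB1 //; lra.
have etm : t `^ q * m `^ q = (c / 2) `^ q * X `^ q.
  have c20 : 0 <= c / 2 by apply: divr_ge0; lra.
  rewrite -(@powRM R t m q t0 m0) -(@powRM R (c / 2) X q c20 X0).
  by congr (_ `^ _); rewrite /X; field; lra.
have eL : 2 * t `^ q * (M `^ d * p * m `^ q * k / 2 - M `^ (d - 1) * t * m `^ p / c)
   = (c / 2) `^ q * M `^ (d - 1) * (X `^ q * ((1 + q) * Y - X)).
  rewrite eMd emp -ep.
  have -> : (c / 2) `^ q * M `^ (d - 1) * (X `^ q * (p * Y - X)) = (t `^ q * m `^ q) * M `^ (d - 1) * (p * Y - X) by rewrite etm; ring.
  by rewrite /X /Y; field; lra.
have eYp : Y `^ q * Y = M `^ p * k `^ p.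
  by rewrite mulrC mulr_powRB1 // ?powRM //; lra.
have eMp : M `^ (d - 1 + p) = M `^ (d - 1) * M `^ p.
  by rewrite powRD //; rewrite implybE; apply/orP; left; rewrite gt_eqF //; lra.
rewrite eL eMp.
have hc : (c / 2) `^ q <= (c / q) `^ q.
  apply: mono_powR; [lra | apply: divr_ge0; lra |].
  have e : c / q - c / 2 = c * (2 - q) / (2 * q) by field; lra.
  have : 0 <= c * (2 - q) / (2 * q) by apply: divr_ge0; nra.
  lra.
have hM : 0 <= M `^ (d - 1) := powR_ge0 _ _.
have hcq : 0 <= (c / 2) `^ q := powR_ge0 _ _.
apply: (le_trans (y := (c / 2) `^ q * M `^ (d - 1) * (Y `^ q * Y))).
  by apply: ler_wpM2l => //; apply: mulr_ge0.
rewrite eYp.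
have h5 : 0 <= M `^ (d - 1) * (M `^ p * k `^ p) by apply: mulr_ge0 => //; apply: mulr_ge0; apply: powR_ge0.
have := ler_wpM2r h5 hc.
by rewrite !mulrA.
Qed.

Unset Implicit Arguments.

Theorem lemma2p2 (R : realType) (p delta : R) (hp1 : 1 < p) (hp2 : p <= 2)
  (hdelta : 1 <= delta) (a b c d e f : R) (he : 0 <= e) (hf : 0 <= f) :
  (Vpow (p - 1) (a - b) - Vpow (p - 1) (c - d)) *
    (Vpow delta (a - c) * e `^ p - Vpow delta (b - d) * f `^ p)
  >= (p - 1) / 2 `^ (delta + 1)
       * (`|a - b| + `|c - d|) `^ (p - 2)
       * (`|a - c| + `|b - d|) `^ (delta - 1)
       * `|(a - c) - (b - d)| ^+ 2
       * (e `^ p + f `^ p)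
     - (2 `^ (delta + 1) / (p - 1)) `^ (p - 1)
       * (`|a - c| + `|b - d|) `^ (p + delta - 1)
       * `|e - f| `^ p.
Proof.
have -> : p - 2 = (p - 1) - 1 by ring.
have -> : p + delta - 1 = delta - 1 + p by ring.
have hxy : (a - b) - (c - d) = (a - c) - (b - d) by ring.
move: hxy.
move: (a - b) (c - d) (a - c) (b - d) => x y u v hxy.
set q := p - 1.
have q0 : 0 < q by rewrite /q; lra.
have q1 : q <= 1 by rewrite /q; lra.
have d0 : 0 < delta by lra.
set P := Vpow q x - Vpow q y.
set C := 2 `^ (delta + 1).
have C0 : 0 < C by rewrite /C powR_gt0.
set N := `|x| + `|y|.
set M := `|u| + `|v|.
set ep := e `^ p.
set fp := f `^ p.
have ep0 : 0 <= ep := powR_ge0 _ _.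
have fp0 : 0 <= fp := powR_ge0 _ _.
set E := (C / q) `^ q * M `^ (delta - 1 + p) * `|e - f| `^ p.
have E0 : 0 <= E by rewrite /E; apply: mulr_ge0; [apply: mulr_ge0|]; apply: powR_ge0.
have hN : 0 <= N `^ (q - 1) := powR_ge0 _ _.
have hM : 0 <= M `^ (delta - 1) := powR_ge0 _ _.
rewrite real_normK ?num_real //.
have [uv|uv] := eqVneq (u - v) 0.
  have exy : x = y by lra.
  have -> : P = 0 by rewrite /P exy subrr.
  rewrite uv expr0n /= !mulr0 !mul0r; lra.
set s := (u - v) ^+ 2.
have s0 : 0 < s by rewrite /s lt_neqAle sqr_ge0 andbT eq_sym sqrf_eq0.
have F1 := I1 x y q0 q1.
rewrite hxy -/P -/N -/s in F1.
have F2 := Dlow u v hdelta.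
rewrite -/M -/C -/s in F2.
set Q1 := Vpow delta u - Vpow delta v in F2.
have F3 := Wup x y q0 q1.
rewrite -/P hxy in F3.
have F4 := Sbound u v hdelta.
rewrite -/M in F4.
have [m [m0 [F5 F6]]] := gbound (ltW hp1) he hf.
rewrite -/ep -/fp in F5 F6.
have A1 : 0 <= P * (u - v).
  have : 0 <= q * N `^ (q - 1) * s by apply: mulr_ge0; [apply: mulr_ge0; [apply: ltW|]|apply: ltW].
  lra.
have A2 : 0 <= Q1 * (u - v).
  have : 0 <= C * (Q1 * (u - v)).
    have : 0 <= 4 * M `^ (delta - 1) * s by apply: mulr_ge0; [apply: mulr_ge0; [lra|]|apply: ltW].
    lra.
  by rewrite pmulr_rge0.
have PQ : (P * (u - v)) * (Q1 * (u - v)) = P * Q1 * s by rewrite /s; ring.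
have PQ0 : 0 <= P * Q1.
  have : 0 <= P * Q1 * s by rewrite -PQ; apply: mulr_ge0.
  by rewrite pmulr_lge0.
have B1 : 4 * q * N `^ (q - 1) * M `^ (delta - 1) * s <= C * (P * Q1).
  have h := ler_pM (mulr_ge0 (mulr_ge0 (ltW q0) hN) (ltW s0)) (mulr_ge0 (mulr_ge0 (ltW (ltr0Sn _ 3)) hM) (ltW s0)) F1 F2.
  have e1 : q * N `^ (q - 1) * s * (4 * M `^ (delta - 1) * s) = (4 * q * N `^ (q - 1) * M `^ (delta - 1) * s) * s by ring.
  have e2 : P * (u - v) * (C * (Q1 * (u - v))) = (C * (P * Q1)) * s by rewrite /s; ring.
  rewrite e1 e2 in h.
  by rewrite -(ler_pM2r s0).
set t := `|u - v|.
have t0 : 0 < t by rewrite /t normr_gt0.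
have st : s = t * t by rewrite /s /t -real_normK ?num_real // expr2.
have B2 : 4 * M `^ (delta - 1) * t <= C * `|Q1|.
  have h : C * (Q1 * (u - v)) = C * `|Q1| * t.
    by rewrite -(ger0_norm A2) normrM /t; ring.
  rewrite h st in F2.
  have ee : 4 * M `^ (delta - 1) * (t * t) = (4 * M `^ (delta - 1) * t) * t by ring.
  by rewrite ee ler_pM2r in F2.
have PQa : P * Q1 = `|P| * `|Q1| by rewrite -normrM ger0_norm.
have dec : P * (Vpow delta u * ep - Vpow delta v * fp) =
   P * Q1 * (ep + fp) / 4 + `|P| * `|Q1| * (ep + fp) / 4 + P * (Vpow delta u + Vpow delta v) * (ep - fp) / 2.
  by rewrite -PQa /Q1; field.
rewrite dec.
set Q2 := Vpow delta u + Vpow delta v.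
have T1 : q / C * N `^ (q - 1) * M `^ (delta - 1) * s * (ep + fp) <= P * Q1 * (ep + fp) / 4.
  have ee : q / C * N `^ (q - 1) * M `^ (delta - 1) * s * (ep + fp) = (4 * q * N `^ (q - 1) * M `^ (delta - 1) * s) / C * (ep + fp) / 4.
    by field; lra.
  rewrite ee; apply: ler_wpM2r; first lra.
  apply: ler_wpM2r; first lra.
  by rewrite ler_pdivrMr // [_ * C]mulrC.
have hP : 0 <= `|P| := normr_ge0 _.
have T2 : - (`|P| * (M `^ delta * (p * m `^ q * `|e - f|))) / 2 <= P * Q2 * (ep - fp) / 2.
  rewrite ler_pM2r ?invr_gt0 //.
  have : - `|P * Q2 * (ep - fp)| <= P * Q2 * (ep - fp) by rewrite lerNnormlW.
  rewrite !normrM.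
  have h1 : `|Q2| * `|ep - fp| <= M `^ delta * (p * m `^ q * `|e - f|).
    apply: ler_pM => //; by rewrite -mulrA.
  have := ler_wpM2l hP h1.
  rewrite -mulrA; lra.
have T3 : `|P| * (4 * M `^ (delta - 1) * t) * m `^ p / C / 4 <= `|P| * `|Q1| * (ep + fp) / 4.
  have h0 : 0 <= 4 * M `^ (delta - 1) * t by apply: mulr_ge0; [apply: mulr_ge0; [lra|]|apply: ltW].
  have h1 := ler_pM h0 (powR_ge0 _ _) B2 F6.
  have h2 := ler_wpM2l hP h1.
  have e1 : `|P| * (4 * M `^ (delta - 1) * t) * m `^ p / C / 4 = (`|P| * (4 * M `^ (delta - 1) * t * m `^ p)) / (4 * C) by field; lra.
  have e2 : `|P| * `|Q1| * (ep + fp) / 4 = (`|P| * (C * `|Q1| * (ep + fp))) / (4 * C) by field; lra.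
  rewrite e1 e2 ler_pM2r // invr_gt0 mulr_gt0 //.
set B := M `^ delta * p * m `^ q * `|e - f| / 2 - M `^ (delta - 1) * t * m `^ p / C.
have T4 : `|P| * B <= E.
  have [Bn|Bp] := leP B 0.
    by apply: le_trans E0; apply: mulr_ge0_le0.
  apply: (le_trans (y := 2 * t `^ q * B)).
    by apply: ler_wpM2r; [apply: ltW | rewrite -/t in F3].
  have := final_scal hp1 hp2 hdelta (ltW t0) (addr_ge0 (normr_ge0 u) (normr_ge0 v)) m0 (normr_ge0 (e - f)) C0.
  by rewrite -/q -/M.
have eB : `|P| * B = `|P| * (M `^ delta * (p * m `^ q * `|e - f|)) / 2 - `|P| * (4 * M `^ (delta - 1) * t) * m `^ p / C / 4.
  by rewrite /B; field; lra.
lra.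
Qed.
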